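(* Assume (A.3). Then there is a constant $C_{T,\lambda,\epsilon}>0$, independent of $h$, such that for all sufficiently small $h$, \[ \int_0^T\big\|f(\dot{\hat y}_h(t),\hat y_h(t),\hat u_h(t),t)\big\|_2^2\,dt\le C_{T,\lambda,\epsilon}h^{2\lambda\eta}. \]
   Context: Let $T>0$. $\mathcal{X}$: pairs $(y,u)$ with $y:[0,T]\to\mathbb{R}^{n_y}$, $y\in L^\infty$, $\dot y\in L^2$ (weak derivative), $u\in L^\infty([0,T];\mathbb{R}^{n_u})$; $\|(y,u)\|_{\mathcal{X}}=\|\dot y\|_{L^2}+\operatorname{ess\,sup}_t\|(y(t),u(t))\|_\infty$, where $\|\dot y\|_{L^2}=(\int_0^T\|\dot y\|_2^2dt)^{1/2}$. Given $M,b$ on $\mathbb{R}^{n_y}\times\mathbb{R}^{n_y}$, $f_1:\mathbb{R}^{n_y}\times\mathbb{R}^{n_u}\times[0,T]\to\mathbb{R}^{n_y}$, $f_2:\mathbb{R}^{n_y}\times\mathbb{R}^{n_u}\times[0,T]\to\mathbb{R}^{n_c}$ and bounds $y_L\le y_R$, $u_L\le u_R$, the optimal control problem minimizes $M(y(0),y(T))$ over $\mathcal{X}$ subject to $b(y(0),y(T))=0$, $\dot y=f_1(y,u,t)$ and $f_2(y,u,t)=0$ a.e., and the bounds for all $t$; $(y^\star,u^\star)$ is a local minimizer. $f(\dot y,y,u,t)=(f_1(y,u,t)-\dot y,\ f_2(y,u,t))$. Mesh $0=t_1<\dots<t_{N+1}=T$, $h=\max_i(t_{i+1}-t_i)$,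 degree $p$; $\mathcal{X}_{h,p}$: $y_h$ continuous and polynomial of degree $\le p$ on each mesh interval, $u_h$ polynomial of degree $\le p-1$ on each mesh interval; $\mathcal{B}_{h,p}\subset\mathcal{X}_{h,p}$ the pairs satisfying the bounds at the sampling points. (Approximability) there are $h_0,\eta,C_\eta>0$ such that for all $h\le h_0$ there is $(y_h,u_h)\in\mathcal{B}_{h,p}$ with $\|(y^\star,u^\star)-(y_h,u_h)\|_{\mathcal{X}}\le C_\eta h^\eta$; $(\hat y_h,\hat u_h)$ denotes a fixed such pair. (A.3): there are $\lambda\in(0,1]$, $C_\lambda>0$, $\epsilon>0$ such that $M$ and $b$ are $\lambda$-H\''older with constant $C_\lambda$ at $(y^\star(0),y^\star(T))$ within Euclidean distance $\epsilon$, and for each $t$, $\|(f_1(y^\star(t),u^\star(t),t)-f_1(v,w,t),f_2(y^\star(t),u^\star(t),t)-f_2(v,w,t))\|_2\le C_\lambda\|(y^\star(t)-v,u^\star(t)-w)\|_2^\lambda$ whenever $\|(y^\star(t)-v,u^\star(t)-w)\|_2\le\epsilon$. *)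

(* Defs.v *)
From HB Require Import structures.
From mathcomp Require Import all_boot all_order all_algebra.
From mathcomp Require Import all_classical all_reals all_analysis.
Set Implicit Arguments. Unset Strict Implicit. Unset Printing Implicit Defensive.
Import Order.TTheory GRing.Theory Num.Theory.
Import numFieldNormedType.Exports.
Local Open Scope classical_set_scope.
Local Open Scope ring_scope.

Section Defs.
Variable R : realType.

Definition leb := (@lebesgue_measure R).

Definition vnorm2 n (v : 'rV[R]_n) : R := Num.sqrt (\sum_(i < n) v ord0 i ^+ 2).
Definition vnorminf n (v : 'rV[R]_n) : R := \big[Num.max/0]_(i < n) `|v ord0 i|.

Definition vbounds n (lo v hi : 'rV[R]_n) : Prop :=
  forall j : 'I_n, lo ord0 j <= v ord0 j <= hi ord0 j.

Definition ess_sup_on (T : R) (g : R -> R) : \bar R :=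
  ereal_inf [set c | \forall t \ae leb, (0 <= t <= T) -> ((g t)%:E <= c)%E].

(* Membership in the space X: y is represented by its (absolutely) continuous
   representative with y(t) = y(0) + int_0^t dy, dy in L^2(0,T) (dy is the weak
   derivative of y), and u is measurable and essentially bounded on [0,T]. *)
Definition inX (T : R) ny nu (y dy : R -> 'rV[R]_ny) (u : R -> 'rV[R]_nu) : Prop :=
  (forall j : 'I_ny,
     measurable_fun `[0, T] (fun s => dy s ord0 j) /\
     leb.-integrable `[0, T] (fun s => ((dy s ord0 j) ^+ 2)%:E) /\
     forall t, 0 <= t <= T ->
       y t ord0 j = y 0 ord0 j + Rintegral leb `[0, t] (fun s => dy s ord0 j)) /\
  (forall j : 'I_nu, measurable_fun `[0, T] (fun s => u s ord0 j)) /\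
  (exists K : R, \forall t \ae leb, (0 <= t <= T) -> vnorminf (u t) <= K).

Definition Xdist (T : R) ny nu (y1 dy1 : R -> 'rV[R]_ny) (u1 : R -> 'rV[R]_nu)
    (y2 dy2 : R -> 'rV[R]_ny) (u2 : R -> 'rV[R]_nu) : \bar R :=
  ((\int[leb]_(s in `[0%R, T]%classic) ((vnorm2 (dy1 s - dy2 s)) ^+ 2)%:E) `^ (2^-1)%R
   + ess_sup_on T (fun t => vnorminf (row_mx (y1 t - y2 t) (u1 t - u2 t))))%E.

Definition feasible (T : R) ny nu nc nb
    (b : 'rV[R]_ny -> 'rV[R]_ny -> 'rV[R]_nb)
    (f1 : 'rV[R]_ny -> 'rV[R]_nu -> R -> 'rV[R]_ny)
    (f2 : 'rV[R]_ny -> 'rV[R]_nu -> R -> 'rV[R]_nc)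
    (yL yR : 'rV[R]_ny) (uL uR : 'rV[R]_nu)
    (y dy : R -> 'rV[R]_ny) (u : R -> 'rV[R]_nu) : Prop :=
  [/\ inX T y dy u,
      b (y 0) (y T) = 0,
      \forall t \ae leb, (0 <= t <= T) -> dy t = f1 (y t) (u t) t,
      \forall t \ae leb, (0 <= t <= T) -> f2 (y t) (u t) t = 0 &
      forall t, 0 <= t <= T -> vbounds yL (y t) yR /\ vbounds uL (u t) uR].

Definition local_minimizer (T : R) ny nu nc nb
    (M : 'rV[R]_ny -> 'rV[R]_ny -> R)
    (b : 'rV[R]_ny -> 'rV[R]_ny -> 'rV[R]_nb)
    (f1 : 'rV[R]_ny -> 'rV[R]_nu -> R -> 'rV[R]_ny)
    (f2 : 'rV[R]_ny -> 'rV[R]_nu -> R -> 'rV[R]_nc)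
    (yL yR : 'rV[R]_ny) (uL uR : 'rV[R]_nu)
    (ys dys : R -> 'rV[R]_ny) (us : R -> 'rV[R]_nu) : Prop :=
  feasible T b f1 f2 yL yR uL uR ys dys us /\
  exists delta : R, 0 < delta /\
    forall y dy u, feasible T b f1 f2 yL yR uL uR y dy u ->
      (Xdist T ys dys us y dy u < delta%:E)%E ->
      M (ys 0) (ys T) <= M (y 0) (y T).

Definition is_mesh (T : R) (N : nat) (t : nat -> R) : Prop :=
  [/\ (0 < N)%N, t 0%N = 0, t N = T & forall i, (i < N)%N -> t i < t i.+1].

Definition meshsize (N : nat) (t : nat -> R) : R :=
  \big[Num.max/0]_(i < N) (t i.+1 - t i).

Definition inB (T : R) ny nu (p : nat) (N : nat) (t : nat -> R) (S : set R)
    (yL yR : 'rV[R]_ny) (uL uR : 'rV[R]_nu)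
    (y dy : R -> 'rV[R]_ny) (u : R -> 'rV[R]_nu) : Prop :=
  [/\ inX T y dy u,
      {within `[0, T], continuous y},
      forall i, (i < N)%N -> forall j : 'I_ny, exists P : {poly R},
        (size P <= p.+1)%N /\ forall s, t i <= s <= t i.+1 -> y s ord0 j = P.[s],
      forall i, (i < N)%N -> forall j : 'I_nu, exists P : {poly R},
        (size P <= p)%N /\ forall s, t i <= s < t i.+1 -> u s ord0 j = P.[s] &
      forall s, S s -> vbounds yL (y s) yR /\ vbounds uL (u s) uR].

End Defs.

(* Main.v *)
Require Import Defs.
From HB Require Import structures.
From mathcomp Require Import all_boot all_order all_algebra.
From mathcomp Require Import all_classical all_reals all_analysis.
From mathcomp Require Import measurable_realfun.
From mathcomp Require Import ring lra.
Import Order.TTheory GRing.Theory Num.Theory.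
Import numFieldNormedType.Exports.
Local Open Scope classical_set_scope.
Local Open Scope ring_scope.
Set Implicit Arguments. Unset Strict Implicit. Unset Printing Implicit Defensive.

Section Helpers.
Context {R : realType}.
Local Open Scope ereal_scope.

Lemma le_int_nm (D : set R) (f g : R -> \bar R) :
  (forall x, D x -> 0 <= f x) -> (forall x, D x -> 0 <= g x) ->
  (forall x, D x -> f x <= g x) ->
  \int[@leb R]_(x in D) f x <= \int[@leb R]_(x in D) g x.
Proof.
move=> f0 g0 fg; rewrite !ge0_integralE//.
apply: ereal_sup_le => _ [h /= hf <-]; exists h => //= x.
apply: le_trans (hf x) _; rewrite /patch; case: ifP => // /[!inE] Dx.
exact: fg.
Qed.

Lemma ae_le_int_nm (D : set R) (f g : R -> \bar R) :
  measurable D -> measurable_fun D g ->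
  (forall x, D x -> 0 <= f x) -> (forall x, D x -> 0 <= g x) ->
  (\forall x \ae (@leb R), D x -> f x <= g x) ->
  \int[@leb R]_(x in D) f x <= \int[@leb R]_(x in D) g x.
Proof.
move=> mD mg f0 g0 [N [mN N0 sN]].
pose g' x := if x \in N then +oo else g x.
have mg' : measurable_fun D g'.
  apply: measurable_fun_if => //.
  - apply: (measurable_fun_bool true).
    rewrite (_ : _ @^-1` _ = N); first exact: measurableI.
    apply/seteqP; split => x /=.
      by move/set_mem.
    by move/mem_set.
  - by apply: (measurable_funS mD) mg => // x [].
have -> : \int[@leb R]_(x in D) g x = \int[@leb R]_(x in D) g' x.
  apply: ae_eq_integral => //; exists N; split => // x /= /not_implyP[Dx].
  by rewrite /g'; case: ifPn => [/set_mem//|_ /(_ erefl)].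
apply: le_int_nm => //.
  by move=> x Dx; rewrite /g'; case: ifPn => // _; exact: g0.
move=> x Dx; rewrite /g'; case: ifPn => [_|xN]; first exact: leey.
apply: contrapT => H; apply: (negP xN); apply/mem_set; apply: sN => /=.
by move/(_ Dx).
Qed.

End Helpers.

Section VHelpers.
Context {R : realType}.

Lemma bigmax_seq_ge (I : eqType) (s : seq I) (F : I -> R) i :
  i \in s -> F i <= \big[Num.max/0]_(j <- s) F j.
Proof.
elim: s => // a s IH; rewrite inE big_cons => /predU1P[->|/IH H].
  by rewrite le_max lexx.
by rewrite le_max H orbT.
Qed.

Lemma bigmax_ord_ge n (F : 'I_n -> R) i : F i <= \big[Num.max/0]_(j < n) F j.
Proof. by apply: bigmax_seq_ge; rewrite mem_index_enum. Qed.

Lemma bigmax_ge0 n (F : 'I_n -> R) : 0 <= \big[Num.max/0]_(j < n) F j.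
Proof.
rewrite unlock /=; elim: (index_enum _) => //= a s IH.
by rewrite le_max IH orbT.
Qed.

Lemma vnorminf_ge0 n (v : 'rV[R]_n) : 0 <= vnorminf v.
Proof. exact: bigmax_ge0. Qed.

Lemma vnorm2_ge0 n (v : 'rV[R]_n) : 0 <= vnorm2 v.
Proof. exact: sqrtr_ge0. Qed.

Lemma vnorm2_sq n (v : 'rV[R]_n) : vnorm2 v ^+ 2 = \sum_(i < n) v ord0 i ^+ 2.
Proof. by rewrite /vnorm2 sqr_sqrtr // sumr_ge0 // => i _; exact: sqr_ge0. Qed.

Lemma vnorm2_le_inf n (v : 'rV[R]_n) : vnorm2 v <= n%:R * vnorminf v.
Proof.
have M0 := vnorminf_ge0 v.
rewrite -(ger0_norm (mulr_ge0 (ler0n _ n) M0)) -sqrtr_sqr /vnorm2 ler_sqrt;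
  last exact: sqr_ge0.
apply: (@le_trans _ _ ((\sum_(i < n) vnorminf v ^+ 2)%R : R)).
  apply: ler_sum => i _; rewrite -real_normK ?num_real //.
  apply: lerXn2r; rewrite ?nnegrE //; exact: bigmax_ord_ge.
rewrite sumr_const card_ord exprMn -[_ *+ n]mulr_natl; apply: ler_wpM2r; first exact: sqr_ge0.
by rewrite -natrX ler_nat; case: (n) => // k; rewrite expnS leq_pmulr.
Qed.

Lemma vnorm2N n (v : 'rV[R]_n) : vnorm2 (- v) = vnorm2 v.
Proof. by rewrite /vnorm2; congr Num.sqrt; apply: eq_bigr => i _; rewrite mxE sqrrN. Qed.

Lemma vnorm2_addsq n (a b : 'rV[R]_n) :
  vnorm2 (a + b) ^+ 2 <= 2 * vnorm2 a ^+ 2 + 2 * vnorm2 b ^+ 2.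
Proof.
rewrite !vnorm2_sq !mulr_sumr -big_split /=; apply: ler_sum => i _.
rewrite mxE; set x := a ord0 i; set y := b ord0 i.
have : 0 <= (x - y) ^+ 2 by exact: sqr_ge0.
nra.
Qed.

Lemma vnorm2_row_mx a c (x : 'rV[R]_a) (y : 'rV[R]_c) :
  vnorm2 (row_mx x y) ^+ 2 = vnorm2 x ^+ 2 + vnorm2 y ^+ 2.
Proof.
by rewrite !vnorm2_sq big_split_ord /=; congr (_ + _); apply: eq_bigr => i _;
  rewrite ?row_mxEl ?row_mxEr.
Qed.

Lemma vnorm2_0 c : vnorm2 (0 : 'rV[R]_c) = 0.
Proof. by rewrite /vnorm2 big1 ?sqrtr0 // => i _; rewrite mxE expr0n. Qed.

End VHelpers.

Section EHelpers.
Context {R : realType}.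
Local Open Scope ereal_scope.

Lemma ess_ge0 (T : R) (g : R -> R) : (0 < T)%R -> (forall t, 0 <= g t)%R ->
  0 <= ess_sup_on T g.
Proof.
move=> T0 g0; apply: le_ereal_inf_tmp => c [N [mN N0 sN]].
rewrite leNgt; apply/negP => c0.
have sub : `[0%R, T] `<=` N.
  move=> t tI; apply: sN => /= H.
  have tT : (0 <= t <= T)%R by move: tI => /=; rewrite in_itv.
  have := le_lt_trans (H tT) c0.
  by rewrite lte_fin ltNge g0.
have := le_measure (@leb R) (mem_set (measurable_itv `[0%R, T])) (mem_set mN) sub.
move=> H; have : leb `[0%R, T] <= 0 by apply: (le_trans H); rewrite le_eqVlt; apply/orP; left; apply/eqP; exact: N0.
by rewrite /leb lebesgue_measure_itv /= lte_fin T0 sube0 lee_fin leNgt T0.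
Qed.

Lemma ess_le (T : R) (g : R -> R) (K K' : R) : ess_sup_on T g <= K%:E -> (K < K')%R ->
  \forall t \ae (@leb R), (0 <= t <= T)%R -> (g t <= K')%R.
Proof.
move=> gK KK'.
have KE : K%:E < K'%:E by rewrite lte_fin.
have [c Sc cK'] := ereal_inf_lt (le_lt_trans gK KE).
case: Sc => N [mN N0 sN]; exists N; split => // t /= nP; apply: sN => /= H.
apply: nP => tT; have := le_lt_trans (H tT) cK'.
by rewrite lte_fin => /ltW.
Qed.

End EHelpers.

Lemma meshsize_gt0 {R : realType} (T : R) N t : is_mesh T N t -> 0 < meshsize N t.
Proof.
case=> N0 _ _ inc; rewrite /meshsize.
case: N N0 inc => // N _ inc; rewrite big_ord_recl /= lt_max subr_gt0 inc //.
Qed.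

Theorem mainTheorem19 (R : realType) (T : R) (ny nu nc nb : nat)
    (M : 'rV[R]_ny -> 'rV[R]_ny -> R)
    (b : 'rV[R]_ny -> 'rV[R]_ny -> 'rV[R]_nb)
    (f1 : 'rV[R]_ny -> 'rV[R]_nu -> R -> 'rV[R]_ny)
    (f2 : 'rV[R]_ny -> 'rV[R]_nu -> R -> 'rV[R]_nc)
    (yL yR : 'rV[R]_ny) (uL uR : 'rV[R]_nu)
    (p : nat) (samp : nat -> (nat -> R) -> set R)
    (ys dys : R -> 'rV[R]_ny) (us : R -> 'rV[R]_nu)
    (h0 eta Ceta : R) (lam Clam eps : R) :
  0 < T ->
  (forall j, yL ord0 j <= yR ord0 j) ->
  (forall j, uL ord0 j <= uR ord0 j) ->
  (0 < p)%N ->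
  local_minimizer T M b f1 f2 yL yR uL uR ys dys us ->
  (* Approximability *)
  0 < h0 -> 0 < eta -> 0 < Ceta ->
  (forall N t, is_mesh T N t -> meshsize N t <= h0 ->
     exists yh dyh uh, inB T p N t (samp N t) yL yR uL uR yh dyh uh /\
       (Xdist T ys dys us yh dyh uh <= (Ceta * meshsize N t `^ eta)%:E)%E) ->
  (* (A.3) *)
  0 < lam -> lam <= 1 -> 0 < Clam -> 0 < eps ->
  (forall a c : 'rV[R]_ny,
     vnorm2 (row_mx (a - ys 0) (c - ys T)) <= eps ->
     `|M a c - M (ys 0) (ys T)| <= Clam * vnorm2 (row_mx (a - ys 0) (c - ys T)) `^ lam /\
     vnorm2 (b a c - b (ys 0) (ys T))
       <= Clam * vnorm2 (row_mx (a - ys 0) (c - ys T)) `^ lam) ->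
  (forall t, 0 <= t <= T -> forall (v : 'rV[R]_ny) (w : 'rV[R]_nu),
     vnorm2 (row_mx (ys t - v) (us t - w)) <= eps ->
     vnorm2 (row_mx (f1 (ys t) (us t) t - f1 v w t) (f2 (ys t) (us t) t - f2 v w t))
       <= Clam * vnorm2 (row_mx (ys t - v) (us t - w)) `^ lam) ->
  (* Conclusion *)
  exists C : R, 0 < C /\ exists h1 : R, 0 < h1 /\
    forall N t (yh dyh : R -> 'rV[R]_ny) (uh : R -> 'rV[R]_nu),
      is_mesh T N t -> meshsize N t <= h0 -> meshsize N t <= h1 ->
      inB T p N t (samp N t) yL yR uL uR yh dyh uh ->
      (Xdist T ys dys us yh dyh uh <= (Ceta * meshsize N t `^ eta)%:E)%E ->
      (\int[@leb R]_(s in `[0%R, T]%classic)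
          ((vnorm2 (row_mx (f1 (yh s) (uh s) s - dyh s) (f2 (yh s) (uh s) s))) ^+ 2)%:E
       <= (C * meshsize N t `^ (2 * lam * eta))%:E)%E.
Proof.
move=> T0 yLR uLR p0 [Hfeas _] h00 eta0 Ceta0 _ lam0 lam1 Clam0 eps0 _ Hf.
case: Hfeas => [[Hys [_ _]] _ Hdyn Halg _].
set m : R := (ny + nu)%:R.
have m0 : 0 <= m by exact: ler0n.
pose A := eps / (2 * (m + 1) * Ceta).
have A0 : 0 < A by rewrite divr_gt0 // !mulr_gt0 // ltr_wpDl.
pose h1 := Num.min 1 (A `^ eta^-1).
pose c1 := (m * (2 * Ceta)) `^ lam.
have c10 : 0 <= c1 by exact: powR_ge0.
have P1 : 0 <= 2 * (Clam * c1) ^+ 2 * T.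
  by rewrite !mulr_ge0 // ?sqr_ge0 // ltW.
have P2 : 0 < 2 * Ceta ^+ 2 by rewrite mulr_gt0 // exprn_gt0.
exists (2 * (Clam * c1) ^+ 2 * T + 2 * Ceta ^+ 2); split; first lra.
exists h1; split; first by rewrite lt_min ltr01 powR_gt0.
move=> N t yh dyh uh Hmesh hh0 hh1 HB HX.
set h := meshsize N t in hh0 hh1 HX *.
have hpos : 0 < h := meshsize_gt0 Hmesh.
have h1' : h <= 1 by move: hh1; rewrite le_min => /andP[].
have hA : h <= A `^ eta^-1 by move: hh1; rewrite le_min => /andP[].
case: HB => [[Hyh [_ _]] _ _ _ _].
have hq : h `^ eta <= A.
  have := @ge0_ler_powR R eta (ltW eta0) h (A `^ eta^-1).
  rewrite !nnegrE ltW // powR_ge0 => /(_ isT isT hA).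
  by rewrite -powRrM mulVf ?gt_eqF // powRr1 // ltW.
have hqe : 0 <= h `^ eta by exact: powR_ge0.
set X := Ceta * h `^ eta.
have X0 : 0 < X by rewrite /X mulr_gt0 // powR_gt0.
move: HX; rewrite /Xdist.
set I := (X in (X `^ _ + _)%E); set E := ess_sup_on _ _ => HX.
have E0 : (0 <= E)%E.
  by apply: ess_ge0 => // s; exact: vnorminf_ge0.
have I0 : (0 <= I)%E by apply: integral_ge0 => s _; rewrite lee_fin sqr_ge0.
have HE : (E <= X%:E)%E by apply: le_trans HX; apply: leeDr; exact: poweR_ge0.
have HI : (I <= (X ^+ 2)%:E)%E.
  have := le_trans (leeDl _ E0) HX.
  move: I0; case: (I) => [r| |] //=.
    rewrite !lee_fin => r0; rewrite powR12_sqrt // => Hr.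
    by rewrite -(sqr_sqrtr r0) lerXn2r // nnegrE ?sqrtr_ge0 // ltW.
  by rewrite invr_eq0 pnatr_eq0 /= => _; rewrite leNgt ltey.
have XK : X < 2 * X by lra.
have Hae := ess_le HE XK.
have mK : m * (2 * X) <= eps.
  have Heq : 2 * (m + 1) * Ceta * A = eps.
    by rewrite /A mulrC divfK // !mulf_neq0 ?gt_eqF // ltr_wpDl.
  have HXA : X <= Ceta * A by rewrite /X ler_wpM2l // ltW.
  nra.
set q := h `^ (eta * lam).
have q0 : 0 <= q by exact: powR_ge0.
pose Gf s := (2 * (Clam * (c1 * q)) ^+ 2 + 2 * vnorm2 (dys s - dyh s) ^+ 2)%:E.
have FF : Filter (nbhs (almost_everywhere (@leb R))) := ae_filter_ringOfSetsType _.
have Hpt : \forall s \ae (@leb R), `[0%R, T]%classic s ->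
    (((vnorm2 (row_mx (f1 (yh s) (uh s) s - dyh s) (f2 (yh s) (uh s) s))) ^+ 2)%:E
    <= Gf s)%E.
  apply: (filterS3 _ _ Hdyn Halg Hae) => s Hd Ha He sI.
  have sT : 0 <= s <= T by move: sI; rewrite /= in_itv.
  have e1 := Hd sT; have e2 := Ha sT; have e3 := He sT.
  have Hc : vnorm2 (row_mx (ys s - yh s) (us s - uh s)) <= m * (2 * X).
    apply: le_trans (vnorm2_le_inf _) _; exact: ler_wpM2l.
  have Hfs := Hf s sT (yh s) (uh s) (le_trans Hc mK).
  have Hc2 : vnorm2 (row_mx (ys s - yh s) (us s - uh s)) `^ lam <= c1 * q.
    have Hm : 0 <= m * (2 * X) by rewrite mulr_ge0 // mulr_ge0 // ltW.
    have := @ge0_ler_powR R lam (ltW lam0) (vnorm2 (row_mx (ys s - yh s) (us s - uh s))) (m * (2 * X)).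
    rewrite !nnegrE vnorm2_ge0 Hm => /(_ isT isT Hc) /le_trans; apply.
    have -> : m * (2 * X) = m * (2 * Ceta) * h `^ eta by rewrite /X; ring.
    have H2C : 0 <= m * (2 * Ceta) by rewrite mulr_ge0 // mulr_ge0 // ltW.
    by rewrite powRM // /q powRrM.
  set Ad := row_mx (f1 (ys s) (us s) s - f1 (yh s) (uh s) s)
                   (f2 (ys s) (us s) s - f2 (yh s) (uh s) s) in Hfs.
  have HA : vnorm2 Ad <= Clam * (c1 * q).
    by apply: le_trans Hfs _; apply: ler_wpM2l => //; exact: ltW.
  have Hid : row_mx (f1 (yh s) (uh s) s - dyh s) (f2 (yh s) (uh s) s)
      = - Ad + row_mx (dys s - dyh s) 0.
    rewrite /Ad opp_row_mx add_row_mx e1 e2; congr row_mx.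
      by rewrite opprB addrA subrK.
    by rewrite sub0r opprK addr0.
  rewrite /Gf lee_fin Hid; apply: le_trans (vnorm2_addsq _ _) _.
  rewrite vnorm2N (vnorm2_row_mx (dys s - dyh s)) vnorm2_0 expr0n addr0 /=.
  apply: lerD; apply: ler_wpM2l => //; apply: lerXn2r; rewrite ?nnegrE ?vnorm2_ge0 //.
  by rewrite mulr_ge0 ?mulr_ge0 // ltW.
have mG0 : measurable_fun `[0%R, T] (fun s => vnorm2 (dys s - dyh s) ^+ 2).
  rewrite (_ : (fun s => _) = (fun s => \sum_(j < ny) (dys s ord0 j - dyh s ord0 j) ^+ 2)); last first.
    by apply/funext => s; rewrite vnorm2_sq; apply: eq_bigr => j _; rewrite !mxE.
  apply: measurable_sum => j; apply: measurable_funX; apply: measurable_funB.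
    exact: (Hys j).1.
  exact: (Hyh j).1.
have mG : measurable_fun `[0%R, T] Gf.
  apply/measurable_EFinP; apply: measurable_funD; first exact: measurable_cst.
  by apply: measurable_funM => //; exact: measurable_cst.
have B0 : 0 <= 2 * (Clam * (c1 * q)) ^+ 2 by rewrite mulr_ge0 // sqr_ge0.
apply: le_trans (ae_le_int_nm (measurable_itv _) mG _ _ Hpt) _.
- by move=> s _; rewrite lee_fin sqr_ge0.
- by move=> s _; rewrite lee_fin addr_ge0 // mulr_ge0 // sqr_ge0.
have [r Ir] : exists r, I = r%:E.
  by move: I0 HI; case: (I) => [r0 _ _| |] //; exists r0.
have -> : Gf = (fun s => (2 * (Clam * (c1 * q)) ^+ 2)%:E
                     + 2%:E * ((vnorm2 (dys s - dyh s)) ^+ 2)%:E)%E.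
  by apply/funext => s; rewrite /Gf EFinD EFinM.
have mG2 : measurable_fun `[0%R, T]
    (fun s => 2%:E * ((vnorm2 (dys s - dyh s)) ^+ 2)%:E)%E.
  by apply: measurable_funeM; exact/measurable_EFinP.
have G20 : forall s, `[0%R, T]%classic s -> (0 <= 2%:E * ((vnorm2 (dys s - dyh s)) ^+ 2)%:E)%E.
  by move=> s _; rewrite mule_ge0 // lee_fin sqr_ge0.
rewrite ge0_integralD //.
rewrite integral_cst; last exact: measurable_itv.
rewrite ge0_integralZl_EFin //; last 2 first.
- by move=> s _; rewrite lee_fin sqr_ge0.
- by apply/measurable_EFinP; exact: mG0.
have LT : (@leb R `[0%R, T] = T%:E)%E.
  by rewrite /leb lebesgue_measure_itv /= lte_fin T0 sube0.
rewrite [X in (_ * X + _)%E](_ : _ = T%:E); last exact: LT.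
rewrite [X in (_ + 2%:E * X)%E](_ : _ = r%:E); last exact: Ir.
rewrite -!EFinM -EFinD lee_fin.
have rX : r <= X ^+ 2 by rewrite -lee_fin -Ir.
have hq2 : h `^ eta <= q.
  apply: (ger_powR (a := h)); first by rewrite hpos h1'.
  by rewrite ger_pMr // lam1.
have X2 : X ^+ 2 <= Ceta ^+ 2 * q ^+ 2.
  by rewrite /X exprMn ler_wpM2l ?sqr_ge0 // lerXn2r // nnegrE.
have -> : h `^ (2 * lam * eta) = q ^+ 2.
  by rewrite /q -powR_mulrn // -powRrM; congr (h `^ _); ring.
have -> : 2 * (Clam * (c1 * q)) ^+ 2 * T = 2 * (Clam * c1) ^+ 2 * T * q ^+ 2 by ring.
lra.
Qed.
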